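(* For any $\varepsilon>0$ and any $v,w\in\mathbb{R}^L$, if $\|v-w\|<\varepsilon$ then $\mathrm{argmax}^\varepsilon(v)\cap\mathrm{argmax}^\varepsilon(w)\neq\varnothing$. In particular, $\mathrm{argmax}^\varepsilon$ restricted to $\Delta_{L-1}$ is an $\varepsilon$-compatible selection rule.
   Context: $\|\cdot\|$ is the Euclidean norm on $\mathbb{R}^L$, $\Delta_{L-1}=\{w\in\mathbb{R}^L:w_i\ge0,\sum_iw_i=1\}$. For $\varepsilon>0$ and $j\in[L]$, $R_j^\varepsilon=\{w\in\mathbb{R}^L: w_j\ge\max_{\ell\neq j}w_\ell+\varepsilon/\sqrt2\}$, and the inflated argmax is $\mathrm{argmax}^\varepsilon(w)=\{j\in[L]:\mathrm{dist}(w,R_j^\varepsilon)<\varepsilon\}$ where $\mathrm{dist}(w,R)=\inf_{u\in R}\|w-u\|$. A selection rule $s:\Delta_{L-1}\to2^{[L]}$ is $\varepsilon$-compatible if $\|v-w\|<\varepsilon$ implies $s(v)\cap s(w)\ne\varnothing$ for all $v,w\in\Delta_{L-1}$. *)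

(* Defs.v *)
From HB Require Import structures.
From mathcomp Require Import all_boot all_order all_algebra.
From mathcomp Require Import boolp classical_sets reals.
Set Implicit Arguments. Unset Strict Implicit. Unset Printing Implicit Defensive.
Import Order.TTheory GRing.Theory Num.Theory.
Local Open Scope ring_scope.
Local Open Scope classical_set_scope.

Section Defs.
Variables (R : realType) (L : nat).

Definition enorm (x : 'I_L -> R) : R := Num.sqrt (\sum_(i < L) x i ^+ 2).

(* R_j^eps = { w | w_j >= max_{l <> j} w_l + eps/sqrt 2 } (max written out) *)
Definition Rreg (eps : R) (j : 'I_L) : set ('I_L -> R) :=
  [set u | forall l : 'I_L, l != j -> u l + eps / Num.sqrt 2 <= u j].

Definition dist (w : 'I_L -> R) (A : set ('I_L -> R)) : R :=
  inf [set enorm (fun i => w i - u i) | u in A].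

Definition argmax_eps (eps : R) (w : 'I_L -> R) : set 'I_L :=
  [set j | dist w (Rreg eps j) < eps].

Definition simplex : set ('I_L -> R) :=
  [set w | (forall i, 0 <= w i) /\ \sum_(i < L) w i = 1].

Definition eps_compatible (s : ('I_L -> R) -> set 'I_L) (eps : R) : Prop :=
  forall v w, simplex v -> simplex w ->
    enorm (fun i => v i - w i) < eps -> s v `&` s w <> set0.

End Defs.

(* Main.v *)
Require Import Defs.
From HB Require Import structures.
From mathcomp Require Import all_boot all_order all_algebra.
From mathcomp Require Import boolp classical_sets reals.
From mathcomp Require Import lra.
Import Order.TTheory GRing.Theory Num.Theory.
Local Open Scope ring_scope.
Local Open Scope classical_set_scope.

Section Aux.
Variables (R : realType) (L : nat) (eps : R).
Hypothesis heps : 0 < eps.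

Definition cc : R := eps / Num.sqrt 2.

Lemma cc_pos : 0 < cc.
Proof. by rewrite /cc divr_gt0 // sqrtr_gt0 ltr0n. Qed.

Lemma cc2 : cc ^+ 2 * 2 = eps ^+ 2.
Proof.
rewrite /cc expr_div_n sqr_sqrtr ?ler0n // mulfVK //.
by rewrite pnatr_eq0.
Qed.

Definition pp (a : R) : R := if 0 <= a then a else 0.

Lemma pp_ge0 a : 0 <= pp a.
Proof. by rewrite /pp; case: ifP. Qed.

Lemma pp_id a : 0 <= a -> pp a = a.
Proof. by rewrite /pp => ->. Qed.

Lemma pp0 a : a <= 0 -> pp a = 0.
Proof.
rewrite /pp; case: ifP => // h1 h2.
by apply/eqP; rewrite eq_le h2 h1.
Qed.

Definition Phi (x : 'I_L -> R) (t : R) : R := \sum_(l < L) (pp (x l - t)) ^+ 2.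

Lemma Phi_ge0 x t : 0 <= Phi x t.
Proof. by apply: sumr_ge0 => i _; rewrite sqr_ge0. Qed.

Lemma Phi_term x t l : pp (x l - t) ^+ 2 <= Phi x t.
Proof.
rewrite /Phi (bigD1 l) //= lerDl.
by apply: sumr_ge0 => i _; rewrite sqr_ge0.
Qed.

Definition Tset (x : 'I_L -> R) : set R :=
  [set y | exists t, Phi x t < eps ^+ 2 /\ y = t + cc - Num.sqrt (eps ^+ 2 - Phi x t)].

Definition Theta x := inf (Tset x).

Lemma le_sumabs (x : 'I_L -> R) l : x l <= \sum_(i < L) `|x i|.
Proof.
rewrite (bigD1 l) //=; apply: le_trans (ler_norm (x l)) _.
by rewrite lerDl; apply: sumr_ge0 => i _.
Qed.

Lemma Tset_ne x : Tset x !=set0.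
Proof.
set t := \sum_(i < L) `|x i|.
have P0 : Phi x t = 0.
  rewrite /Phi big1 // => i _; rewrite pp0 ?expr0n //.
  by rewrite subr_le0 le_sumabs.
exists (t + cc - Num.sqrt (eps ^+ 2 - Phi x t)), t; split => //.
by rewrite P0 exprn_gt0.
Qed.

Lemma Tset_lb x (i0 : 'I_L) : has_lbound (Tset x).
Proof.
have he := heps.

exists (x i0 - 2 * eps) => y [t [Ht ->]].
have Hterm := Phi_term x t i0.
have Hs0 := sqrtr_ge0 (eps ^+ 2 - Phi x t).
have Hs : Num.sqrt (eps ^+ 2 - Phi x t) ^+ 2 = eps ^+ 2 - Phi x t.
  by rewrite sqr_sqrtr // subr_ge0 ltW.
have HP := Phi_ge0 x t.
have Hc := cc_pos.
have Ht2 : x i0 - eps <= t.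
  rewrite leNgt; apply/negP => H.
  have : eps <= x i0 - t by lra.
  move=> H2; rewrite pp_id in Hterm; last lra.
  have h3 : eps * eps <= (x i0 - t) * (x i0 - t) by apply: ler_pM; lra.
  rewrite !expr2 in Ht Hterm; lra.
have : Num.sqrt (eps ^+ 2 - Phi x t) <= eps.
  rewrite leNgt; apply/negP => h4.
  have : eps * eps < Num.sqrt (eps ^+ 2 - Phi x t) * Num.sqrt (eps ^+ 2 - Phi x t).
    by apply: ltr_pM; lra.
  rewrite -!expr2 Hs; lra.
lra.
Qed.

Lemma good (i0 : 'I_L) x j : Theta x < x j -> dist x (Rreg eps j) < eps.
Proof.
have he := heps.

move=> /(inf_lt (Tset_ne x)) [y [t [Ht ->]] Hy].
pose u := fun l : 'I_L => if l == j then t + cc else (if x l <= t then x l else t).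
have Hu : Rreg eps j u.
  move=> l /negPf lj; rewrite /u lj eqxx -/cc lerD2r.
  by case: ifP => // /negbT; rewrite -ltNge => /ltW.
have Hsum : \sum_(l < L) (x l - u l) ^+ 2 < eps ^+ 2.
  have E1 : \sum_(l < L) (x l - u l) ^+ 2 =
      (x j - t - cc) ^+ 2 + (Phi x t - pp (x j - t) ^+ 2).
    rewrite (bigD1 j) //= /Phi [in RHS](bigD1 j) //=.
    have -> : forall a b : R, a + b - a = b by move=> a b; lra.
    rewrite /u eqxx; congr (_ + _); first by congr (_ ^+ 2); lra.
    apply: eq_bigr => l /negPf ->; case: ifP => H.
      by rewrite subrr pp0 ?expr0n // subr_le0.
    by rewrite pp_id // subr_ge0 ltW // ltNge H.
  rewrite E1.
  have Hq0 := sqrtr_ge0 (eps ^+ 2 - Phi x t).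
  have Hq : Num.sqrt (eps ^+ 2 - Phi x t) ^+ 2 = eps ^+ 2 - Phi x t.
    by rewrite sqr_sqrtr // subr_ge0 ltW.
  move: Hy Hq0 Hq; move: (Num.sqrt (eps ^+ 2 - Phi x t)) => q Hy Hq0 Hq.
  have Hc := cc_pos.
  have Hsq : cc - q < x j - t by lra.
  move: Hsq; move: (x j - t) => s Hsq.
  case: (lerP s 0) => Hs0.
    rewrite pp0 //. nra.
  rewrite pp_id; last lra.
  case: (lerP cc q) => Hcq; nra.
apply: le_lt_trans (_ : enorm (fun i => x i - u i) < eps).
  apply: ge_inf.
    by exists 0 => z [uu _ <-]; rewrite sqrtr_ge0.
  by exists u.
rewrite /enorm.
set S := \sum_(l < L) (x l - u l) ^+ 2 in Hsum *.
have HS0 : 0 <= S by apply: sumr_ge0 => i _; rewrite sqr_ge0.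
have Hq0 := sqrtr_ge0 S.
have Hq : Num.sqrt S ^+ 2 = S by rewrite sqr_sqrtr.
nra.
Qed.

Lemma PhiLB (i0 : 'I_L) x t : Theta x <= t + cc ->
  eps ^+ 2 - (t + cc - Theta x) ^+ 2 <= Phi x t.
Proof.
have he := heps.

move=> H.
case: (lerP (eps ^+ 2) (Phi x t)) => HP.
  have := sqr_ge0 (t + cc - Theta x); lra.
have Hin : Tset x (t + cc - Num.sqrt (eps ^+ 2 - Phi x t)) by exists t.
have := ge_inf (Tset_lb x i0) Hin; rewrite -/(Theta x) => H2.
have Hq0 := sqrtr_ge0 (eps ^+ 2 - Phi x t).
have Hq : Num.sqrt (eps ^+ 2 - Phi x t) ^+ 2 = eps ^+ 2 - Phi x t.
  by rewrite sqr_sqrtr // subr_ge0 ltW.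
nra.
Qed.

Lemma sum_sq_le (a : 'I_L -> R) : (forall i, 0 <= a i) ->
  \sum_(i < L) a i ^+ 2 <= (\sum_(i < L) a i) ^+ 2.
Proof.
move=> Ha; rewrite expr2 big_distrl /=.
apply: ler_sum => i _; rewrite expr2 ler_wpM2l //.
by rewrite (bigD1 i) //= lerDl; apply: sumr_ge0.
Qed.

Lemma compat_aux (i0 : 'I_L) v w : Theta w <= Theta v ->
  \sum_(l < L) (v l - w l) ^+ 2 < eps ^+ 2 ->
  exists j, Theta v < v j /\ Theta w < w j.
Proof.
have he := heps.

move=> Hk Hsum; apply: contrapT => Hno.
have Hno' : forall l, ~ (Theta v < v l /\ Theta w < w l).
  by move=> l H; apply: Hno; exists l.
set Tv := Theta v in Hk Hno' *; set Tw := Theta w in Hk Hno' *.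
set k := Tv - Tw.
have Hc := cc_pos.
have Hc2 := cc2.
have F1 : eps ^+ 2 - cc ^+ 2 <= Phi v Tv.
  have := PhiLB i0 v Tv; rewrite -/Tv.
  rewrite addrAC subrr add0r; apply; lra.
have F3 : eps ^+ 2 - (k + cc) ^+ 2 <= Phi w Tv.
  have := PhiLB i0 w Tv; rewrite -/Tw.
  have -> : Tv + cc - Tw = k + cc by rewrite /k; lra.
  apply; lra.
set a := fun l => pp (v l - Tv).
have Ha0 : forall l, 0 <= a l by move=> l; apply: pp_ge0.
have F2 : cc <= \sum_(l < L) a l.
  have H : Phi v Tv <= (\sum_(l < L) a l) ^+ 2 := sum_sq_le a Ha0.
  have H0 : 0 <= \sum_(l < L) a l by apply: sumr_ge0.
  nra.
have [l0 Hl0] : exists l0, Tv < v l0.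
  apply: contrapT => Hn.
  have : \sum_(l < L) a l = 0.
    rewrite big1 // => l _; rewrite /a pp0 // subr_le0 leNgt.
    by apply/negP => H; apply: Hn; exists l.
  lra.
pose g := fun l => a l ^+ 2 + 2 * k * a l + pp (w l - Tv) ^+ 2.
have Hk0 : 0 <= k by rewrite /k subr_ge0.
have Hg : forall l, g l <= (v l - w l) ^+ 2.
  move=> l; rewrite /g /a.
  case: (lerP (v l) Tv) => Hv.
    rewrite pp0 ?subr_le0 // expr0n /= mulr0 !add0r.
    case: (lerP (w l) Tv) => Hw.
      by rewrite pp0 ?subr_le0 // expr0n /= sqr_ge0.
    rewrite pp_id; last lra.
    nra.
  have Hw : w l <= Tw.
    rewrite leNgt; apply/negP => Hw; exact: Hno' l (conj Hv Hw).
  rewrite pp_id; last lra.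
  rewrite (@pp0 (w l - Tv)); last lra.
  rewrite expr0n /= addr0.
  have : k <= v l - w l - (v l - Tv) by rewrite /k; lra.
  nra.
have Hg0 : g l0 + k ^+ 2 <= (v l0 - w l0) ^+ 2.
  rewrite /g /a pp_id; last lra.
  have Hw : w l0 <= Tw.
    rewrite leNgt; apply/negP => Hw; exact: Hno' l0 (conj Hl0 Hw).
  rewrite (@pp0 (w l0 - Tv)); last lra.
  rewrite expr0n /= addr0.
  have : k <= v l0 - w l0 - (v l0 - Tv) by rewrite /k; lra.
  nra.
have Hbig : \sum_(l < L) g l + k ^+ 2 <= \sum_(l < L) (v l - w l) ^+ 2.
  rewrite (bigD1 l0) //= [X in _ <= X](bigD1 l0) //=.
  rewrite addrAC; apply: lerD => //.
  by apply: ler_sum => l _; apply: Hg.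
have Eg : \sum_(l < L) g l = Phi v Tv + 2 * k * \sum_(l < L) a l + Phi w Tv.
  rewrite /g !big_split /= -big_distrr /=; congr (_ + _ + _).
nra.
Qed.

End Aux.

Theorem theorem3 (R : realType) (L : nat) (hL : (0 < L)%N) (eps : R) (heps : 0 < eps) :
  (forall v w : 'I_L -> R, enorm (fun i => v i - w i) < eps ->
     argmax_eps eps v `&` argmax_eps eps w <> set0) /\
  eps_compatible (@argmax_eps R L eps) eps.
Proof.
pose i0 : 'I_L := Ordinal hL.
have main : forall v w : 'I_L -> R, enorm (fun i => v i - w i) < eps ->
     argmax_eps eps v `&` argmax_eps eps w <> set0.
  move=> v w Hn.
  have Hs : \sum_(l < L) (v l - w l) ^+ 2 < eps ^+ 2.
    move: Hn; rewrite /enorm => Hn.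
    set S := \sum_(l < L) (v l - w l) ^+ 2 in Hn *.
    have HS0 : 0 <= S by apply: sumr_ge0 => i _; rewrite sqr_ge0.
    have Hq0 := sqrtr_ge0 S.
    have Hq : Num.sqrt S ^+ 2 = S by rewrite sqr_sqrtr.
    nra.
  have [j [Hv Hw]] : exists j, @Theta R L eps v < v j /\ @Theta R L eps w < w j.
    case/orP: (le_total (@Theta R L eps w) (@Theta R L eps v)) => H.
      exact: (@compat_aux R L eps heps i0 v w H Hs).
    have Hs' : \sum_(l < L) (w l - v l) ^+ 2 < eps ^+ 2.
      by under eq_bigr => l _ do rewrite -sqrrN opprB.
    have [j [H1 H2]] := @compat_aux R L eps heps i0 w v H Hs'.
    by exists j.
  move=> H0.
  have : (argmax_eps eps v `&` argmax_eps eps w) j.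
    by split; apply: (@good R L eps heps i0).
  by rewrite H0.
split => //.
move=> v w _ _; exact: main.
Qed.
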